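(* Let $A_1$ and $A_2$ be finite-dimensional simple evolution algebras over a field $\mathbb{K}$. If $\dim\mathfrak{Diag}(A_i)>0$ for some $i\in\{1,2\}$, then $A_1\otimes A_2$ is a simple evolution algebra.
   Context: An evolution algebra over $\mathbb{K}$ is a $\mathbb{K}$-algebra with a basis $B=\{e_1,\dots,e_n\}$ (natural basis) such that $e_ie_j=0$ for $i\ne j$. A $\mathbb{K}$-algebra is simple if $A^2\neq 0$ and its only ideals are $0$ and $A$. For a simple finite-dimensional evolution algebra, any two natural bases agree up to reordering and nonzero rescaling of their elements; the diagonal subspace is $\mathfrak{Diag}(A):=\sum_{e\in B}(eA)e$ for a natural basis $B$, independent of this choice. The tensor product $A_1\otimes A_2$ of evolution algebras with natural bases $\{a_i\}$, $\{b_p\}$ is the evolution algebra with natural basis $\{a_i\otimes b_p\}$ and product $(a\otimes b)(a'\otimes b')=aa'\otimes bb'$. *)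

(* Defs.v *)
From mathcomp Require Import all_boot all_order all_algebra.
From mathcomp Require Export mxtens.
Set Implicit Arguments. Unset Strict Implicit. Unset Printing Implicit Defensive.
Import GRing.Theory.
Local Open Scope ring_scope.

(* An n-dimensional evolution algebra over K, given with its natural basis
   e_0,...,e_{n-1}, is encoded by its structure matrix C:
      e_i e_i = \sum_k C i k e_k,   e_i e_j = 0 (i <> j).
   Carrier: row vectors 'rV[K]_n (coordinates in the natural basis). *)

Section Evo.
Variables (K : fieldType) (n : nat).

Definition evbasis (i : 'I_n) : 'rV[K]_n := delta_mx 0 i.

(* the product: (sum x_i e_i)(sum y_j e_j) = sum_i x_i y_i e_i^2 *)
Definition evmul (C : 'M[K]_n) (x y : 'rV[K]_n) : 'rV[K]_n :=
  \row_k \sum_i x 0 i * y 0 i * C i k.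

Definition evprodv (C : 'M[K]_n) (U V : {vspace 'rV[K]_n}) : {vspace 'rV[K]_n} :=
  <<[seq evmul C u v | u <- vbasis U, v <- vbasis V]>>%VS.

Definition ev_ideal (C : 'M[K]_n) (I : {vspace 'rV[K]_n}) : Prop :=
  forall x y, x \in I -> evmul C x y \in I /\ evmul C y x \in I.

Definition ev_simple (C : 'M[K]_n) : Prop :=
  (evprodv C fullv fullv != 0%VS) /\
  forall I, ev_ideal C I -> I = 0%VS \/ I = fullv.

Definition ev_diag (C : 'M[K]_n) : {vspace 'rV[K]_n} :=
  (\sum_(i < n) evprodv C (evprodv C <[evbasis i]> fullv) <[evbasis i]>)%VS.

End Evo.

(* tensor product: natural basis a_i (x) b_p indexed by mxtens_index (i, p);
   (a_i (x) b_p)^2 = a_i^2 (x) b_p^2 = \sum_{j,q} C1 i j C2 p q (a_j (x) b_q),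
   i.e. the structure matrix is the Kronecker product C1 *t C2 (tensmxE). *)
Definition ev_tensor (K : fieldType) (n m : nat) (C1 : 'M[K]_n) (C2 : 'M[K]_m)
  : 'M[K]_(n * m) := tensmx C1 C2.

(* Main.v *)
Require Import Defs.
From mathcomp Require Import all_boot all_order all_algebra.
From Stdlib Require Import ClassicalEpsilon Classical.
From mathcomp Require Import zify.
Set Implicit Arguments. Unset Strict Implicit. Unset Printing Implicit Defensive.
Import GRing.Theory.
Local Open Scope ring_scope.

Lemma evmulEl (K : fieldType) N (C : 'M[K]_N) x y :
  evmul C x y = (\row_i (x 0 i * y 0 i)) *m C.
Proof. by apply/rowP => k; rewrite !mxE; apply: eq_bigr => i _; rewrite mxE. Qed.

Lemma evmulC (K : fieldType) N (C : 'M[K]_N) x y : evmul C x y = evmul C y x.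
Proof. by apply/rowP => k; rewrite !mxE; apply: eq_bigr => i _; rewrite (mulrC (x 0 i)). Qed.

Lemma evmul_lin (K : fieldType) N (C : 'M[K]_N) x y :
  evmul C x y = mulmxr (diag_mx y *m C) x.
Proof.
rewrite evmulEl /= mulmxA; congr (_ *m _); apply/rowP => i.
by rewrite mul_mx_diag !mxE.
Qed.

Lemma evmul_basis (K : fieldType) N (C : 'M[K]_N) x k :
  evmul C x (evbasis K k) = x 0 k *: row k C.
Proof.
rewrite evmulEl rowE scalemxAl; congr (_ *m _); apply/rowP => i.
rewrite !mxE; case: (eqVneq k i) => [->|ne]; first by rewrite eqxx mulr1.
by rewrite andbF !mulr0.
Qed.

Lemma mem_evprodv (K : fieldType) N (C : 'M[K]_N) (U V : {vspace 'rV[K]_N}) u v :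
  u \in U -> v \in V -> evmul C u v \in evprodv C U V.
Proof.
move=> uU vV.
have E : forall a b, a *m (diag_mx b *m C) = evmul C a b by move=> a b; rewrite evmul_lin.
rewrite (coord_vbasis uU) evmul_lin linear_sum; apply: memv_suml => i _.
rewrite linearZ memvZ //= E evmulC.
rewrite (coord_vbasis vV) evmul_lin linear_sum; apply: memv_suml => j _.
rewrite linearZ memvZ //= E evmulC.
apply: memv_span; apply: allpairs_f; apply: mem_nth; by rewrite size_tuple.
Qed.

Lemma evprodv_sub (K : fieldType) N (C : 'M[K]_N) (U V W : {vspace 'rV[K]_N}) :
  (forall u v, u \in U -> v \in V -> evmul C u v \in W) ->
  (evprodv C U V <= W)%VS.
Proof.
move=> H; apply/span_subvP => w /allpairsP [[u v] [/= uU vV ->]].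
by apply: H; apply: vbasis_mem.
Qed.

Definition pb (P : Prop) : bool := if excluded_middle_informative P then true else false.
Lemma pbP (P : Prop) : reflect P (pb P).
Proof. by rewrite /pb; case: excluded_middle_informative => h; constructor. Qed.

Definition suppv (K : fieldType) N (P : pred 'I_N) : {vspace 'rV[K]_N} :=
  lker (linfun (mulmxr (diag_mx (\row_k ((~~ P k)%:R : K))))).

Lemma mem_suppv (K : fieldType) N (P : pred 'I_N) (x : 'rV[K]_N) :
  reflect (forall k, ~~ P k -> x 0 k = 0) (x \in suppv K P).
Proof.
rewrite /suppv memv_ker lfunE /= mul_mx_diag.
apply: (iffP eqP) => [H k Pk|H].
  by move/rowP: H => /(_ k); rewrite !mxE Pk mulr1.
apply/rowP => k; rewrite !mxE; case Pk: (P k); first by rewrite mulr0.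
by rewrite H ?Pk // mul0r.
Qed.

Fixpoint walk (K : fieldType) N (C : 'M[K]_N) (k : nat) (i j : 'I_N) : Prop :=
  match k with
  | 0 => i = j
  | k'.+1 => exists l, C i l != 0 /\ walk C k' l j
  end.

Lemma walk_cat (K : fieldType) N (C : 'M[K]_N) a b i j l :
  walk C a i j -> walk C b j l -> walk C (a + b) i l.
Proof.
elim: a i => [|a IH] i /=; first by move=> ->.
by move=> [l' [H1 H2]] H3; exists l'; split => //; apply: IH H3.
Qed.

Lemma walk_edge (K : fieldType) N (C : 'M[K]_N) i j : C i j != 0 -> walk C 1 i j.
Proof. by move=> H; exists j. Qed.

Lemma walk_closed (K : fieldType) N (C : 'M[K]_N) (P : 'I_N -> Prop) :
  (forall a b, P a -> C a b != 0 -> P b) ->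
  forall k i j, P i -> walk C k i j -> P j.
Proof.
move=> HP; elim=> [|k IH] i j Pi /=; first by move=> <-.
by move=> [l [H1 H2]]; apply: (IH l) => //; apply: HP H1.
Qed.

Lemma walk_loop (K : fieldType) N (C : 'M[K]_N) i : C i i != 0 -> forall k, walk C k i i.
Proof. by move=> H; elim=> [|k IH] //=; exists i. Qed.

Lemma walk_tens (K : fieldType) n m (C1 : 'M[K]_n) (C2 : 'M[K]_m) k :
  forall i j p q, walk C1 k i j -> walk C2 k p q ->
  walk (ev_tensor C1 C2) k (mxtens_index (i, p)) (mxtens_index (j, q)).
Proof.
elim: k => [|k IH] i j p q /=; first by move=> -> ->.
move=> [l [H1 H2]] [r [H3 H4]]; exists (mxtens_index (l, r)); split.
  by rewrite /ev_tensor tensmxE mulf_neq0.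
exact: IH.
Qed.

Definition SC (K : fieldType) N (C : 'M[K]_N) := forall i j, exists k, walk C k i j.
Definition AL (K : fieldType) N (C : 'M[K]_N) :=
  forall i j, exists L, forall k, (L <= k)%N -> walk C k i j.
Definition UB (K : fieldType) N (C : 'M[K]_N) :=
  forall i j L, exists k, (L <= k)%N /\ walk C k i j.

Lemma AL_of (K : fieldType) N (C : 'M[K]_N) i0 : SC C -> C i0 i0 != 0 -> AL C.
Proof.
move=> sc H i j; have [a Ha] := sc i i0; have [b Hb] := sc i0 j.
exists (a + b)%N => k Hk.
have -> : k = (a + ((k - (a + b)) + b))%N by lia.
apply: walk_cat Ha _; apply: walk_cat Hb; exact: walk_loop.
Qed.

Lemma UB_of (K : fieldType) N (C : 'M[K]_N) :
  SC C -> (forall q, exists l, C q l != 0) -> UB C.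
Proof.
move=> sc out p q L.
have [l Hl] := out q; have [c0 Hc0] := sc l q; have [c Hc] := sc p q.
have cyc : walk C c0.+1 q q by exists l.
have H : forall t, walk C (c + t * c0.+1) p q.
  elim=> [|t IH]; first by rewrite mul0n addn0.
  by rewrite mulSn addnCA addnC; apply: walk_cat IH cyc.
exists (c + L * c0.+1)%N; split => //.
by apply: leq_trans (leq_addl _ _); rewrite leq_pmulr.
Qed.

Lemma tens_reach (K : fieldType) n m (C1 : 'M[K]_n) (C2 : 'M[K]_m) :
  (AL C1 /\ UB C2) \/ (UB C1 /\ AL C2) ->
  forall i j p q, exists k, walk C1 k i j /\ walk C2 k p q.
Proof.
case=> [[al ub]|[ub al]] i j p q.
  have [L HL] := al i j; have [k [Hk W]] := ub p q L.
  by exists k; split => //; apply: HL.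
have [L HL] := al p q; have [k [Hk W]] := ub i j L.
by exists k; split => //; apply: HL.
Qed.

Lemma evmulZl (K : fieldType) N (C : 'M[K]_N) c x y :
  evmul C (c *: x) y = c *: evmul C x y.
Proof. by rewrite !evmul_lin linearZ. Qed.

Lemma simple_leftinv (K : fieldType) N (C : 'M[K]_N) :
  ev_simple C -> exists B, B *m C = 1%:M.
Proof.
move=> [nz simp].
pose R : {vspace 'rV[K]_N} := limg (linfun (mulmxr C)).
have inR : forall x y, evmul C x y \in R.
  move=> x y; apply/memv_imgP; exists (\row_i (x 0 i * y 0 i)); first exact: memvf.
  by rewrite lfunE /= evmulEl.
have [R0|Rf] : R = 0%VS \/ R = fullv.
  apply: simp => x y _; split; exact: inR.
  exfalso; move/negP: nz; apply; rewrite -subv0; apply: evprodv_sub => u v _ _.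
  by rewrite -R0.
have : forall k : 'I_N, exists u : 'rV[K]_N, 'e_k = u *m C.
  move=> k; have : ('e_k : 'rV[K]_N) \in R by rewrite Rf memvf.
  by move/memv_imgP => [u _ ->]; exists u; rewrite lfunE.
move/fin_all_exists => [f Hf]; exists (\matrix_k f k).
by apply/row_matrixP => k; rewrite row_mul rowK row1 Hf.
Qed.

Lemma simple_unit (K : fieldType) N (C : 'M[K]_N) : ev_simple C -> C \in unitmx.
Proof. by move/simple_leftinv => [B /mulmx1_unit []]. Qed.

Lemma row_nz (K : fieldType) N (C : 'M[K]_N) k : C \in unitmx -> row k C != 0.
Proof.
move=> u; apply/eqP => H.
have : ('e_k : 'rV[K]_N) = 0 by rewrite -(mulmxK u 'e_k) -rowE H mul0mx.
by move/rowP => /(_ k); rewrite !mxE !eqxx /= => /eqP; rewrite oner_eq0.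
Qed.

Lemma out_edge (K : fieldType) N (C : 'M[K]_N) k : C \in unitmx -> exists l, C k l != 0.
Proof.
move=> u; apply: NNPP => H; have := row_nz k u; apply/negP; rewrite negbK.
apply/eqP/rowP => l; rewrite !mxE; apply/eqP; apply: NNPP => nz; apply: H.
by exists l; apply/negP.
Qed.

Lemma simple_SC (K : fieldType) N (C : 'M[K]_N) : ev_simple C -> SC C.
Proof.
move=> [_ simp] i j.
pose S := fun l => pb (exists k, walk C k i l).
have clo : forall a b, S a -> C a b != 0 -> S b.
  move=> a b /pbP [k Hk] Hab; apply/pbP; exists (k + 1)%N.
  by apply: walk_cat Hk _; apply: walk_edge.
have Si : S i by apply/pbP; exists 0%N.
pose J := suppv K S.
have idJ : ev_ideal C J.
  have H : forall x y, x \in J -> evmul C x y \in J.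
    move=> x y /mem_suppv xJ; apply/mem_suppv => k nk; rewrite mxE.
    apply: big1 => l _; case Sl: (S l).
      suff -> : C l k = 0 by rewrite mulr0.
      case: (eqVneq (C l k) 0) => // nz; move/negP: nk; case; exact: clo Sl nz.
    by rewrite xJ ?Sl // !mul0r.
  by move=> x y xJ; split; [|rewrite evmulC]; apply: H.
have eJ : forall l, S l -> ('e_l : 'rV[K]_N) \in J.
  move=> l Sl; apply/mem_suppv => k nk; rewrite mxE.
  case: (eqVneq l k) => [e|ne]; first by rewrite -e Sl in nk.
  by rewrite andbF.
have [J0|Jf] := simp J idJ.
  have := eJ i Si; rewrite J0 memv0 => /eqP /rowP /(_ i).
  by rewrite !mxE !eqxx /= => /eqP; rewrite oner_eq0.
have : ('e_j : 'rV[K]_N) \in J by rewrite Jf memvf.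
move/mem_suppv => H; case Sj: (S j); first by move/pbP: Sj.
have := H j; rewrite Sj => /(_ isT) /eqP; rewrite !mxE !eqxx /= oner_eq0 //.
Qed.

Lemma diag_loop (K : fieldType) N (C : 'M[K]_N) :
  (0 < \dim (ev_diag C))%N -> exists i, C i i != 0.
Proof.
move=> hd; apply: NNPP => H.
have H' : forall i, C i i = 0.
  by move=> i; case: (eqVneq (C i i) 0) => // nz; case: H; exists i.
suff : ev_diag C = 0%VS by move=> E; rewrite E dimv0 in hd.
rewrite /ev_diag big1 // => i _; apply/eqP; rewrite -subv0.
have sub : (evprodv C <[evbasis K i]> fullv <= <[row i C]>)%VS.
  apply: evprodv_sub => a b /vlineP [c ->] _.
  by rewrite evmulZl evmulC evmul_basis !memvZ // memv_line.
apply: evprodv_sub => u v /(subvP sub) /vlineP [a ->] /vlineP [c ->].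
rewrite evmulZl evmulC evmulZl evmulC evmul_basis mxE H' scale0r !scaler0; exact: mem0v.
Qed.

Lemma simple_pos (K : fieldType) N (C : 'M[K]_N) : ev_simple C -> (0 < N)%N.
Proof.
case: N C => // C [nz _]; exfalso; move/negP: nz; apply; rewrite -subv0.
by apply: evprodv_sub => u v _ _; rewrite thinmx0 mem0v.
Qed.

Theorem corollary4p4 (K : fieldType) (n m : nat)
  (C1 : 'M[K]_n) (C2 : 'M[K]_m) :
  ev_simple C1 -> ev_simple C2 ->
  (0 < \dim (ev_diag C1) \/ 0 < \dim (ev_diag C2))%N ->
  ev_simple (ev_tensor C1 C2).
Proof.
move=> s1 s2 hd.
have u1 := simple_unit s1; have u2 := simple_unit s2.
have n0 := simple_pos s1; have m0 := simple_pos s2.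
have ut : ev_tensor C1 C2 \in unitmx.
  by apply: tensmx_unit => //; rewrite -lt0n.
have ub1 : UB C1 by apply: UB_of; [exact: simple_SC | move=> q; exact: out_edge].
have ub2 : UB C2 by apply: UB_of; [exact: simple_SC | move=> q; exact: out_edge].
have reach : forall i j p q, exists k, walk C1 k i j /\ walk C2 k p q.
  apply: tens_reach; case: hd => /diag_loop [i0 Hi0].
    by left; split => //; apply: (AL_of (simple_SC s1) Hi0).
  by right; split => //; apply: (AL_of (simple_SC s2) Hi0).
set T := ev_tensor C1 C2.
have ebT : forall x k, evmul T x (evbasis K k) = x 0 k *: row k T.
  by move=> x k; rewrite evmul_basis.
split.
  pose k0 := mxtens_index (Ordinal n0, Ordinal m0).
  apply/eqP => E.
  have := mem_evprodv T (memvf (evbasis K k0)) (memvf (evbasis K k0)).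
  rewrite E memv0 ebT mxE !eqxx scale1r => /eqP H.
  by move: (row_nz k0 ut); rewrite H eqxx.
move=> I idI; case: (eqVneq I 0%VS) => [->|nzI]; [by left | right].
have xI := memv_pick I; set x := vpick I in xI.
have xnz : x != 0 by rewrite vpick0.
have [k xk] : exists k, x 0 k != 0.
  apply: NNPP => H; move/eqP: xnz; apply; apply/rowP => k; rewrite mxE.
  by case: (eqVneq (x 0 k) 0) => // nz; case: H; exists k.
have getrow : forall y l, y \in I -> y 0 l != 0 -> row l T \in I.
  move=> y l yI yl; have := (idI y (evbasis K l) yI).1; rewrite ebT => H.
  by rewrite -(scalerK yl (row l T)) memvZ.
have clo : forall a b, row a T \in I -> T a b != 0 -> row b T \in I.
  by move=> a b aI ab; apply: (getrow (row a T)) => //; rewrite mxE.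
have allr : forall l, row l T \in I.
  move=> l; case: (mxtens_indexP k) xk => i p xk.
  case: (mxtens_indexP l) => j q.
  have [t [W1 W2]] := reach i j p q.
  exact: (@walk_closed _ _ T (fun a => row a T \in I) clo t _ _
            (getrow _ _ xI xk) (walk_tens W1 W2)).
apply/vspaceP => v; rewrite memvf.
rewrite -[v](mulmxKV ut) mulmx_sum_row; apply: memv_suml => l _.
by rewrite memvZ.
Qed.
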